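(* Let $\alpha\colon\mathbb{R}\to\mathbb{R}$ be continuous and suppose $S_\alpha$ is a graphical strip over $K$. Then $\frac{\alpha(w_2)-\alpha(w_1)}{w_2-w_1}\ge-1$ for all $w_1<w_2$ if and only if there is a function $\sigma\colon\mathbb{R}\to\mathbb{R}$ such that $-2\le\frac{\sigma(z_2)-\sigma(z_1)}{z_2-z_1}<2$ for all $z_1<z_2$ and $$S_\alpha=\bigcup_{z\in\mathbb{R}}[(-1,-\sigma(z),z),(1,\sigma(z),z)].$$
   Context: $\mathbb{H}$ is $\mathbb{R}^3$ with product $(x,y,z)\cdot(x',y',z')=(x+x',y+y',z+z'+\frac{xy'-yx'}{2})$; $Y^t=(0,t,0)$. A horizontal line is a set $\{p\cdot tv:t\in\mathbb{R}\}$, $v=(a,b,0)\neq0$; a ruled surface is a union of horizontal segments (rulings) with endpoints in its boundary. $V_0=\{(x,0,z)\}$; for $D\subset V_0$, $f\colon D\to\mathbb{R}$, $\Gamma_f=\{u\cdot Y^{f(u)}\}$. A graphical strip over $D$ is an intrinsic graph of a continuous function on $D$ which is ruled and all of whose rulings meet the $z$-axis. $K=\{(x,0,z):|x|\le1\}$. For continuous $\alpha$: $\eta(w)=w+\frac{\alpha(w)}2$ and $S_\alpha=\bigcup_w[(-1,-\alpha(w),\eta(w)),(1,\alpha(w),\eta(w))]$, $[p_1,p_2]$ the line segment. *)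

(* Defs.v *)
From Stdlib Require Import Reals Lra.
Open Scope R_scope.

(* Points of the Heisenberg group H = R^3. *)
Record H3 := mkH { hx : R; hy : R; hz : R }.

Definition hmul (p q : H3) : H3 :=
  mkH (hx p + hx q) (hy p + hy q)
      (hz p + hz q + (hx p * hy q - hy p * hx q) / 2).

Definition hset := H3 -> Prop.
Definition set_eq (S T : hset) : Prop := forall p, S p <-> T p.

Definition segment (p1 p2 : H3) : hset := fun p =>
  exists t, 0 <= t <= 1 /\
    p = mkH (hx p1 + t * (hx p2 - hx p1))
            (hy p1 + t * (hy p2 - hy p1))
            (hz p1 + t * (hz p2 - hz p1)).

(* K = {(x,0,z) : |x| <= 1} ⊂ V_0, parametrized by (x,z). *)
Definition inK (x z : R) : Prop := Rabs x <= 1.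

(* Continuity of f : K -> R (f given as a function of the coordinates
   (x,z) of u = (x,0,z) in V_0; only the values on K matter). *)
Definition continuous_on_K (f : R -> R -> R) : Prop :=
  forall x z, inK x z -> forall eps, 0 < eps -> exists delta, 0 < delta /\
    forall x' z', inK x' z' -> Rabs (x' - x) < delta -> Rabs (z' - z) < delta ->
      Rabs (f x' z' - f x z) < eps.

Definition intrinsic_graph_K (f : R -> R -> R) : hset := fun p =>
  exists x z, inK x z /\ p = hmul (mkH x 0 z) (mkH 0 (f x z) 0).

Definition hline_pt (p : H3) (v1 v2 t : R) : H3 := hmul p (mkH (t * v1) (t * v2) 0).

(* S (a surface over K) is ruled, with all rulings meeting the z-axis:
   every point of S lies on a horizontal segment
   {p0 . (t v) : a <= t <= b} (v = (v1,v2,0) <> 0, a < b) contained in S,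
   whose endpoints lie in the boundary of S (the part of S over the
   boundary {|x| = 1} of K), and which meets the z-axis. *)
Definition ruled_rulings_meet_zaxis_K (S : hset) : Prop :=
  forall p, S p -> exists (p0 : H3) (v1 v2 a b : R),
    (v1 <> 0 \/ v2 <> 0) /\ a < b /\
    (exists t, a <= t <= b /\ p = hline_pt p0 v1 v2 t) /\
    (forall t, a <= t <= b -> S (hline_pt p0 v1 v2 t)) /\
    Rabs (hx (hline_pt p0 v1 v2 a)) = 1 /\
    Rabs (hx (hline_pt p0 v1 v2 b)) = 1 /\
    (exists t, a <= t <= b /\ hx (hline_pt p0 v1 v2 t) = 0
                           /\ hy (hline_pt p0 v1 v2 t) = 0).

Definition graphical_strip_K (S : hset) : Prop :=
  (exists f, continuous_on_K f /\ set_eq S (intrinsic_graph_K f)) /\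
  ruled_rulings_meet_zaxis_K S.

Definition eta (alpha : R -> R) (w : R) : R := w + alpha w / 2.

Definition S_alpha (alpha : R -> R) : hset := fun p =>
  exists w, segment (mkH (-1) (- alpha w) (eta alpha w))
                    (mkH 1 (alpha w) (eta alpha w)) p.

Definition S_sigma (sigma : R -> R) : hset := fun p =>
  exists z, segment (mkH (-1) (- sigma z) z) (mkH 1 (sigma z) z) p.

(* Main.v *)
Require Import Defs.
From Stdlib Require Import Reals Lra.
Open Scope R_scope.

Lemma L1 (n d c : R) : 0 < d -> c*d <= n -> c <= n/d.
Proof. intros Hd H. apply Rmult_le_reg_r with d; auto.
replace (n/d*d) with n by (field; lra). lra. Qed.
Lemma L2 (n d c : R) : 0 < d -> c <= n/d -> c*d <= n.
Proof. intros Hd H. replace n with (n/d*d) by (field; lra).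
apply Rmult_le_compat_r; lra. Qed.
Lemma L3 (n d c : R) : 0 < d -> n < c*d -> n/d < c.
Proof. intros Hd H. apply Rmult_lt_reg_r with d; auto.
replace (n/d*d) with n by (field; lra). lra. Qed.
Lemma L4 (n d c : R) : 0 < d -> n/d < c -> n < c*d.
Proof. intros Hd H. replace n with (n/d*d) by (field; lra).
apply Rmult_lt_compat_r; lra. Qed.

Theorem lemma3p4 (alpha : R -> R) :
  continuity alpha ->
  graphical_strip_K (S_alpha alpha) ->
  ((forall w1 w2, w1 < w2 -> (alpha w2 - alpha w1) / (w2 - w1) >= -1) <->
   exists sigma : R -> R,
     (forall z1 z2, z1 < z2 ->
        -2 <= (sigma z2 - sigma z1) / (z2 - z1) < 2) /\
     set_eq (S_alpha alpha) (S_sigma sigma)).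
Proof.
intros Hc _. split.
- intros Ha.
  assert (Hinc : forall w1 w2, w1 < w2 -> alpha w2 - alpha w1 >= -(w2 - w1)).
  { intros w1 w2 H. specialize (Ha w1 w2 H). apply Rge_le in Ha.
    apply L2 in Ha; lra. }
  assert (Heta : forall w1 w2, w1 < w2 -> eta alpha w2 - eta alpha w1 >= (w2-w1)/2).
  { intros w1 w2 H. specialize (Hinc w1 w2 H). unfold eta. lra. }
  assert (Hcont : forall z, continuity (fun w => eta alpha w - z)).
  { intro z. unfold eta. apply continuity_minus; [|apply continuity_const; intros ? ?; reflexivity].
    apply continuity_plus; [apply (derivable_continuous id derivable_id)|].
    unfold Rdiv. apply continuity_mult; auto. apply continuity_const; intros ? ?; reflexivity. }
  assert (Hsurj : forall z, {w | eta alpha w = z}).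
  { intro z. set (M := 2 * Rabs (z - eta alpha 0) + 2).
    assert (HM : 0 < M) by (unfold M; pose proof (Rabs_pos (z - eta alpha 0)); lra).
    assert (H1 : eta alpha M - eta alpha 0 >= M/2) by (replace (M/2) with ((M-0)/2) by field; apply Heta; lra).
    assert (H2 : eta alpha 0 - eta alpha (-M) >= M/2) by (replace (M/2) with ((0 - -M)/2) by field; apply Heta; lra).
    assert (Hz1 : z - eta alpha 0 <= Rabs (z - eta alpha 0)) by apply Rle_abs.
    assert (Hz2 : -(z - eta alpha 0) <= Rabs (z - eta alpha 0)) by (rewrite <- Rabs_Ropp; apply Rle_abs).
    destruct (IVT (fun w => eta alpha w - z) (-M) M (Hcont z)) as [w [_ Hw]].
    - lra.
    - unfold M in *. lra.
    - unfold M in *. lra.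
    - exists w. lra. }
  assert (Hinj : forall w1 w2, eta alpha w1 = eta alpha w2 -> w1 = w2).
  { intros w1 w2 H. destruct (Rtotal_order w1 w2) as [h|[h|h]]; auto.
    - specialize (Heta _ _ h). lra.
    - specialize (Heta _ _ h). lra. }
  set (inv := fun z => proj1_sig (Hsurj z)).
  assert (Hinv : forall z, eta alpha (inv z) = z) by (intro z; unfold inv; destruct (Hsurj z); auto).
  exists (fun z => alpha (inv z)). split.
  + intros z1 z2 Hz.
    assert (Hw : inv z1 < inv z2).
    { destruct (Rlt_or_le (inv z1) (inv z2)) as [h|h]; auto.
      destruct h as [h|h].
      - specialize (Heta _ _ h). rewrite !Hinv in Heta. lra.
      - assert (z1 = z2) by (rewrite <- (Hinv z1), <- (Hinv z2), h; reflexivity). lra. }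
    pose proof (Hinc _ _ Hw) as Hi.
    pose proof (Hinv z1) as E1. pose proof (Hinv z2) as E2. unfold eta in E1, E2.
    split.
    * apply L1; lra.
    * apply L3; lra.
  + intro p. split.
    * intros [w Hs]. exists (eta alpha w).
      assert (E : inv (eta alpha w) = w) by (apply Hinj; apply Hinv).
      rewrite E. exact Hs.
    * intros [z Hs]. exists (inv z). rewrite Hinv. exact Hs.
- intros [sigma [Hs Heq]] w1 w2 Hw.
  assert (Hrel : forall w, alpha w = sigma (eta alpha w)).
  { intro w. destruct (Heq (mkH 1 (alpha w) (eta alpha w))) as [H _].
    destruct H as [z [t [Ht E]]].
    - exists w. exists 1. split; [lra|]. simpl; f_equal; ring.
    - injection E; intros E3 E2 E1.
      assert (t = 1) by lra. subst t.
      assert (z = eta alpha w) by lra. subst z. lra. }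
  pose proof (Hrel w1) as A1. pose proof (Hrel w2) as A2.
  unfold eta in A1, A2.
  assert (G : forall z1 z2, z1 = w1 + alpha w1 / 2 -> z2 = w2 + alpha w2 / 2 ->
     alpha w1 = sigma z1 -> alpha w2 = sigma z2 ->
     (alpha w2 - alpha w1) / (w2 - w1) >= -1).
  { intros z1 z2 Ez1 Ez2 B1 B2.
    assert (Hz : z1 < z2).
    { destruct (Rlt_or_le z1 z2) as [h|h]; auto. destruct h as [h|h].
      - destruct (Hs _ _ h) as [_ B]. apply L4 in B; [|lra]. lra.
      - rewrite h in B2. lra. }
    destruct (Hs _ _ Hz) as [B _]. apply L2 in B; [|lra].
    apply Rle_ge. apply L1; [lra|]. lra. }
  apply (G _ _ eq_refl eq_refl A1 A2).
Qed.
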